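(* (1) Let $G=(V,E)$ be a graph with non-negative edge weights $w:E\to\mathbb{R}_{\ge0}$. The Steiner tree diversity of $G$ is the unique maximal diversity $\delta$ on $V$ (with respect to the pointwise order $\delta_1\preceq\delta_2$ iff $\delta_1(A)\le\delta_2(A)$ for all finite $A$) such that $\delta(\{u,v\})\le w(\{u,v\})$ for all $\{u,v\}\in E$. (2) Let $H=(V,E)$ be a hypergraph with non-negative weights $w:E\to\mathbb{R}_{\ge0}$. The hypergraph Steiner diversity of $H$ is the unique maximal diversity $\delta$ on $V$ (with respect to $\preceq$) such that $\delta(A)\le w(A)$ for all $A\in E$.
   Context: A diversity on a set $X$ is a function $\delta$ from finite subsets of $X$ to $\mathbb{R}$ with $\delta(A)\ge 0$, $\delta(A)=0$ whenever $|A|\le 1$ (values $0$ on larger sets are allowed), and $\delta(A\cup B)+\delta(B\cup C)\ge\delta(A\cup C)$ for all finite $A,B,C$ with $B\neq\emptyset$. The Steiner tree diversity of a weighted graph assigns to $A\subseteq V$ the minimum total weight of a connected subgraph of $G$ containing $A$. The hypergraph Steiner diversity assigns to $A\subseteq V$ the minimum of $\sum_{e\in E'}w(e)$ over all $E'\subseteq E$ such that the sub-hypergraph induced by $E'$ is connected and includes $A$. *)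

(* Defs.v *)
From mathcomp Require Import all_boot all_order all_algebra.
From mathcomp Require Import reals.
Set Implicit Arguments. Unset Strict Implicit. Unset Printing Implicit Defensive.
Import Order.TTheory GRing.Theory Num.Theory.
Local Open Scope ring_scope.

Section Defs.
Variables (R : realType) (V : finType).

Definition is_diversity (d : {set V} -> R) : Prop :=
  [/\ (forall A : {set V}, 0 <= d A),
      (forall A : {set V}, (#|A| <= 1)%N -> d A = 0) &
      (forall A B C : {set V}, B != set0 -> d (A :|: C) <= d (A :|: B) + d (B :|: C))].

Definition div_le (d1 d2 : {set V} -> R) : Prop := forall A : {set V}, d1 A <= d2 A.

Definition adj (F : {set {set V}}) : rel V :=
  fun x y => [exists e in F, (x \in e) && (y \in e)].

Definition feasible (E : {set {set V}}) (A : {set V})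
    (p : {set V} * {set {set V}}) : bool :=
  [&& p.2 \subset E,
      [forall e in p.2, e \subset p.1],
      A \subset p.1 &
      [forall x in p.1, forall y in p.1, connect (adj p.2) x y]].

Definition connected_hg (E : {set {set V}}) : bool :=
  [forall x, forall y, connect (adj E) x y].

(* The big-min is seeded with the total weight of E, which is attained by the
   feasible candidate (setT, E) when (V,E) is connected and is an upper bound
   of the minimum since weights are nonnegative. *)
Definition steiner (E : {set {set V}}) (w : {set V} -> R) (A : {set V}) : R :=
  \big[Order.min/ \sum_(e in E) w e]_(p | feasible E A p) \sum_(e in p.2) w e.

Definition steiner_tree_diversity := steiner.
Definition hypergraph_steiner_diversity := steiner.

Definition unique_maximal (P : ({set V} -> R) -> Prop) (d : {set V} -> R) : Prop :=
  [/\ is_diversity d, P d,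
      (forall d', is_diversity d' -> P d' -> div_le d' d) &
      (forall d', is_diversity d' -> P d' ->
         (forall d'', is_diversity d'' -> P d'' -> div_le d' d'' -> d'' = d') ->
         d' = d)].

End Defs.

(* Main.v *)
Require Import Defs.
From mathcomp Require Import all_boot all_order all_algebra.
From mathcomp Require Import reals.
Import Order.TTheory GRing.Theory Num.Theory.
Local Open Scope ring_scope.

Section Main.
Variables (R : realType) (V : finType).

Lemma sum_sub (P1 P2 : pred {set V}) (F : {set V} -> R) :
  (forall i, P1 i -> P2 i) -> (forall i, P2 i -> 0 <= F i) ->
  \sum_(i | P1 i) F i <= \sum_(i | P2 i) F i.
Proof.
move=> H12 H0; rewrite [X in X <= _]big_mkcond [X in _ <= X]big_mkcond /=.
apply: ler_sum => i _.
case P1i: (P1 i); first by rewrite (H12 _ P1i).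
by case P2i: (P2 i) => //; apply: H0.
Qed.

Lemma sum_setU (A B : {set {set V}}) (F : {set V} -> R) :
  (forall i, i \in B -> 0 <= F i) ->
  \sum_(i in A :|: B) F i <= \sum_(i in A) F i + \sum_(i in B) F i.
Proof.
move=> H0; rewrite (@big_setID _ _ _ _ (A :|: B) A) /=.
have -> : (A :|: B) :&: A = A by apply/setIidPr; exact: subsetUl.
rewrite lerD2l; apply: sum_sub => //.
by move=> i; rewrite !inE => /andP[/negbTE Ai]; rewrite Ai.
Qed.

Variable d : {set V} -> R.
Hypothesis dd : is_diversity d.

Lemma d_ge0 (A : {set V}) : 0 <= d A. Proof. by case: dd. Qed.
Lemma d_small (A : {set V}) : (#|A| <= 1)%N -> d A = 0. Proof. by case: dd => _ H _; apply: H. Qed.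
Lemma d_tri (A B C : {set V}) : B != set0 -> d (A :|: C) <= d (A :|: B) + d (B :|: C).
Proof. by case: dd => _ _ H; apply: H. Qed.

Lemma d_add1 (A : {set V}) y : d A <= d (y |: A).
Proof.
have := @d_tri set0 [set y] A.
rewrite !set0U (d_small [set y]) ?cards1 // add0r; apply.
by apply/set0Pn; exists y; rewrite inE.
Qed.

Lemma d_mono (A B : {set V}) : A \subset B -> d A <= d B.
Proof.
move eqn : #|B :\: A| => n; elim: n A eqn => [|n IH] A eqn sAB.
  move/eqP: eqn; rewrite cards_eq0 setD_eq0 => sBA.
  by rewrite (_ : A = B) // ; apply/eqP; rewrite eqEsubset sAB.
have: B :\: A != set0 by rewrite -card_gt0 eqn.
case/set0Pn=> y; rewrite inE => /andP[yA yB].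
apply: le_trans (d_add1 A y) _; apply: IH.
  move: eqn; rewrite (cardsD1 y (B :\: A)) !inE yA yB /= add1n => -[<-].
  by rewrite setDDl setUC.
by rewrite subUset sub1set yB sAB.
Qed.

Lemma d_union (X Y : {set V}) : X :&: Y != set0 -> d (X :|: Y) <= d X + d Y.
Proof.
case/set0Pn=> z; rewrite inE => /andP[zX zY].
have e1 : X :|: [set z] = X by apply/setUidPl; rewrite sub1set.
have e2 : [set z] :|: Y = Y by apply/setUidPr; rewrite sub1set.
have := @d_tri X [set z] Y; rewrite e1 e2.
by apply; apply/set0Pn; exists z; rewrite inE.

Qed.

Lemma growth (F : {set {set V}}) (Vs : {set V}) x :
  (forall e, e \in F -> e \subset Vs) -> x \in Vs ->
  (forall y, y \in Vs -> connect (adj F) x y) ->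
  d Vs <= \sum_(e in F) d e.
Proof.
move=> FV xV con.
pose Q (S : {set V}) := [&& x \in S, S \subset Vs &
                          d S <= \sum_(e in F | e \subset S) d e].
have Q1 : Q [set x].
  rewrite /Q inE eqxx sub1set xV d_small ?cards1 //=.
  by apply: sumr_ge0 => i _; apply: d_ge0.
case: (@arg_maxnP _ _ _ (fun S : {set V} => #|S|) Q1) => S /and3P[xS SV dS] Smax.
have clos : forall e, e \in F -> forall y, y \in e -> y \in S -> e \subset S.
  move=> e eF y ye yS; apply/negPn/negP => neS.
  have : Q (S :|: e).
    rewrite /Q inE xS subUset SV FV //=.
    apply: le_trans (@d_union S e _) _.
      by apply/set0Pn; exists y; rewrite inE yS.
    rewrite [X in _ <= X](bigD1 e) /=; last by rewrite eF subsetUr.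
    rewrite addrC lerD2r; apply: le_trans dS _; apply: sum_sub.
      move=> i /andP[-> iS]; rewrite (subset_trans iS) ?subsetUl //=.
      by apply/eqP=> ie; move: neS; rewrite -ie iS.
    by move=> i _; apply: d_ge0.
  move/Smax => /= le1; move: (proper_card (properUl neS)); rewrite ltnNge; by case/negP.
have VS : Vs \subset S.
  apply/subsetP=> y /con /connectP[p pth ->].
  elim: p x xS pth {xV Q1 con Smax dS Q} => //= z p IHp a aS /andP[az pth].
  apply: IHp pth; case/existsP: az => e /andP[eF /andP[ae ze]].
  by apply: (subsetP (clos e eF a ae aS)).
have -> : Vs = S by apply/eqP; rewrite eqEsubset VS SV.
apply: le_trans dS _; apply: sum_sub => [i /andP[]//|i _]; exact: d_ge0.
Qed.

End Main.

Section Steiner.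
Variables (R : realType) (V : finType) (E : {set {set V}}) (w : {set V} -> R).
Hypothesis w0 : forall e, e \in E -> 0 <= w e.
Hypothesis conn : connected_hg E.

Lemma steiner_le A p : feasible E A p -> steiner E w A <= \sum_(e in p.2) w e.
Proof.
move=> fp; rewrite /steiner (bigD1 p) //=.
by rewrite ge_min lexx.
Qed.

Lemma feasT A : feasible E A (setT, E).
Proof.
rewrite /feasible /= subxx subsetT /=; apply/andP; split.
  by apply/forall_inP=> e _; apply: subsetT.
apply/forall_inP=> x _; apply/forall_inP=> y _.
by move/forallP: conn => /(_ x) /forallP /(_ y).
Qed.

Lemma steiner_att A : exists p, feasible E A p /\ steiner E w A = \sum_(e in p.2) w e.
Proof.
rewrite /steiner; apply: (big_ind (fun v => exists p, feasible E A p /\ v = \sum_(e in p.2) w e)).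
- by exists (setT, E); split=> //; apply: feasT.
- move=> a b [p [fp ->]] [q [fq ->]].
  by case: leP => _; [exists p|exists q].
- by move=> p fp; exists p.
Qed.

Lemma sum_w0 (F : {set {set V}}) : F \subset E -> 0 <= \sum_(e in F) w e.
Proof. by move=> FE; apply: sumr_ge0 => e eF; apply: w0; apply: (subsetP FE). Qed.

Lemma steiner_ge0 A : 0 <= steiner E w A.
Proof.
have [p [fp ->]] := steiner_att A; apply: sum_w0.
by case/and4P: fp.
Qed.

Lemma steiner_upper (d : {set V} -> R) A :
  is_diversity d -> (forall e, e \in E -> d e <= w e) -> d A <= steiner E w A.
Proof.
move=> dd dw; have [p [fp ->]] := steiner_att A.
case/and4P: fp => sE sub1 sA cn.
case: (set_0Vmem p.1) => [e0|[x xp]].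
  rewrite (@d_small _ _ _ dd); first by apply: sum_w0.
  by move: sA; rewrite e0 subset0 => /eqP ->; rewrite cards0.
apply: le_trans (@d_mono _ _ _ dd _ _ sA) _.
have FV : forall e, e \in p.2 -> e \subset p.1.
  by move=> e ep; apply: (forall_inP sub1).
have cc : forall y, y \in p.1 -> connect (adj p.2) x y.
  by move=> y yp; move/forall_inP: cn => /(_ x xp) /forall_inP /(_ y yp).
apply: le_trans (@growth _ _ _ dd _ _ x FV xp cc) _.
by apply: ler_sum => e ep; apply: dw; apply: (subsetP sE).
Qed.

Lemma steiner_div : is_diversity (steiner E w).
Proof.
split; first exact: steiner_ge0.
  move=> A cA; apply/eqP; rewrite eq_le steiner_ge0 andbT.
  have fp : feasible E A (A, set0).
    rewrite /feasible /= sub0set subxx /=; apply/andP; split.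
      by apply/forall_inP=> e; rewrite inE.
    apply/forall_inP=> x xA; apply/forall_inP=> y yA.
    have -> : y = x.
      move: cA; rewrite leq_eqVlt ltnS leqn0 cards_eq0 => /orP[/cards1P[z Az]|/eqP A0].
        by move: xA yA; rewrite Az !inE => /eqP -> /eqP ->.
      by move: xA; rewrite A0 inE.
    exact: connect0.
  by apply: le_trans (steiner_le _ _ fp) _; rewrite big_set0.
move=> A B C /set0Pn[b bB].
have [p [fp ->]] := steiner_att (A :|: B).
have [q [fq ->]] := steiner_att (B :|: C).
case/and4P: fp => pE p1 pA pc; case/and4P: fq => qE q1 qA qc.
have bp : b \in p.1 by apply: (subsetP pA); rewrite inE bB orbT.
have bq : b \in q.1 by apply: (subsetP qA); rewrite inE bB.
have mono : forall F G : {set {set V}}, F \subset G ->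
   forall x y, connect (adj F) x y -> connect (adj G) x y.
  move=> F G FG x y; apply: connect_sub => u v /existsP[e /andP[eF uv]].
  by apply: connect1; apply/existsP; exists e; rewrite (subsetP FG).
have csym : forall F : {set {set V}}, connect_sym (adj F).
  move=> F; apply: sym_connect_sym => u v.
  by apply/existsP/existsP=> -[e /andP[eF /andP[h1 h2]]]; exists e; rewrite eF h1 h2.
have conp : forall x, x \in p.1 -> connect (adj (p.2 :|: q.2)) x b.
  move=> x xp; apply: (mono p.2); first exact: subsetUl.
  by move/forall_inP: pc => /(_ x xp) /forall_inP /(_ b bp).
have conq : forall x, x \in q.1 -> connect (adj (p.2 :|: q.2)) x b.
  move=> x xq; apply: (mono q.2); first exact: subsetUr.
  by move/forall_inP: qc => /(_ x xq) /forall_inP /(_ b bq).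
have fr : feasible E (A :|: C) (p.1 :|: q.1, p.2 :|: q.2).
  rewrite /feasible /=; apply/and4P; split; first by rewrite subUset pE qE.
  - apply/forall_inP=> e; rewrite inE => /orP[ep|eq].
      by apply: subset_trans (forall_inP p1 e ep) (subsetUl _ _).
    by apply: subset_trans (forall_inP q1 e eq) (subsetUr _ _).
  - rewrite subUset; apply/andP; split.
      by apply: subset_trans (subsetUl A B) (subset_trans pA (subsetUl _ _)).
    by apply: subset_trans (subsetUr B C) (subset_trans qA (subsetUr _ _)).
  - have conr : forall x, x \in p.1 :|: q.1 -> connect (adj (p.2 :|: q.2)) x b.
      by move=> x; rewrite inE => /orP[/conp|/conq].
    apply/forall_inP=> x xr; apply/forall_inP=> y yr.
    by apply: connect_trans (conr x xr) _; rewrite csym; apply: conr.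
apply: le_trans (steiner_le _ _ fr) _; apply: sum_setU => e eq.
by apply: w0; apply: (subsetP qE).
Qed.

Lemma steiner_edge e : e \in E -> steiner E w e <= w e.
Proof.
move=> eE.
have fp : feasible E e (e, [set e]).
  rewrite /feasible /= sub1set eE subxx /=; apply/andP; split.
    by apply/forall_inP=> f; rewrite inE => /eqP ->.
  apply/forall_inP=> x xe; apply/forall_inP=> y ye; apply: connect1.
  by apply/existsP; exists e; rewrite inE eqxx xe ye.
by apply: le_trans (steiner_le _ _ fp) _; rewrite big_set1.
Qed.

Lemma general (P : ({set V} -> R) -> Prop) :
  P (steiner E w) ->
  (forall d, P d -> forall e, e \in E -> d e <= w e) ->
  unique_maximal P (steiner E w).
Proof.
move=> Ps Pd; split=> //; first exact: steiner_div.
  by move=> d' dd Pd' A; apply: steiner_upper => //; apply: Pd.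
move=> d' dd Pd' mx; symmetry; apply: mx => //; first exact: steiner_div.
by move=> A; apply: steiner_upper => //; apply: Pd.
Qed.

End Steiner.

Theorem theorem3 (R : realType) :
  (* (1) graphs *)
  (forall (V : finType) (E : {set {set V}}) (w : {set V} -> R),
     (forall e : {set V}, e \in E -> #|e| = 2%N) ->
     (forall e : {set V}, e \in E -> 0 <= w e) ->
     connected_hg E ->
     unique_maximal
       (fun d => forall u v : V, [set u; v] \in E -> d [set u; v] <= w [set u; v])
       (steiner_tree_diversity E w)) /\
  (* (2) hypergraphs *)
  (forall (V : finType) (E : {set {set V}}) (w : {set V} -> R),
     (forall e : {set V}, e \in E -> 0 <= w e) ->
     connected_hg E ->
     unique_maximal
       (fun d => forall A : {set V}, A \in E -> d A <= w A)
       (hypergraph_steiner_diversity E w)).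
Proof.
split.
  move=> V E w c2 w0 cn; apply: general => //.
    by move=> u v uv; apply: steiner_edge.
  move=> d Pd e eE; have /eqP/cards2P [u [v [_ ee]]] := c2 e eE.
  by move: eE; rewrite ee; apply: Pd.

move=> V E w w0 cn; apply: general => //.
by move=> A AE; apply: steiner_edge.
Qed.
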